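(* Let $\lambda>0$ and let $\{f_i\}_{i\in I}$ be a $\lambda$-tight frame for a Hilbert space $\mathbb H$. Then for every $J\subset I$ and every $f\in\mathbb H$, $$\lambda\sum_{i\in J}|\langle f,f_i\rangle|^2-\Big\|\sum_{i\in J}\langle f,f_i\rangle f_i\Big\|^2=\lambda\sum_{i\in J^c}|\langle f,f_i\rangle|^2-\Big\|\sum_{i\in J^c}\langle f,f_i\rangle f_i\Big\|^2,$$ where $J^c=I\setminus J$.
   Context: A family $\{f_i\}_{i\in I}$ in a Hilbert space $\mathbb H$ is a $\lambda$-tight frame if $\sum_{i\in I}|\langle f,f_i\rangle|^2=\lambda\|f\|^2$ for all $f\in\mathbb H$. *)

(* Defs.v *)
From HB Require Import structures.
From mathcomp Require Import all_boot all_order all_algebra.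
From mathcomp Require Import finmap.
From mathcomp Require Import boolp classical_sets reals.
From mathcomp Require Import complex.

Set Implicit Arguments.
Unset Strict Implicit.
Unset Printing Implicit Defensive.

Import Order.TTheory GRing.Theory Num.Theory.
Local Open Scope ring_scope.
Local Open Scope complex_scope.

Section Hilbert.
Variable R : realType.
Variable H : lmodType R[i].
Variable ip : H -> H -> R[i].

Definition hnorm (x : H) : R := Num.sqrt (complex.Re (ip x x)).

Record is_hilbert : Prop := IsHilbert {
  ip_linear : forall (a : R[i]) (x y z : H), ip (a *: x + y) z = a * ip x z + ip y z;
  ip_conj   : forall x y : H, ip y x = (ip x y)^*;
  ip_pos    : forall x : H, x != 0 -> 0 < complex.Re (ip x x);
  ip_complete : forall u : nat -> H,
      (forall e : R, 0 < e -> exists N : nat, forall m n, (N <= m)%N -> (N <= n)%N ->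
         hnorm (u m - u n) < e) ->
      exists l : H, forall e : R, 0 < e -> exists N : nat, forall n, (N <= n)%N ->
         hnorm (l - u n) < e
}.
End Hilbert.

(* Unconditional summation over an arbitrary (sub)set J of an index type I:
   s = sum_{i in J} g i  iff the net of finite partial sums over finite
   subsets of J, directed by inclusion, converges to s w.r.t. the norm N. *)
Definition has_usum (R : realType) (V : zmodType) (N : V -> R)
    (I : choiceType) (J : set I) (g : I -> V) (s : V) : Prop :=
  forall e : R, 0 < e ->
    exists F0 : {fset I}, (forall i, i \in F0 -> J i) /\
      forall F : {fset I}, fsubset F0 F -> (forall i, i \in F -> J i) ->
        N (s - \sum_(i <- F) g i) < e.

Definition csq (R : realType) (z : R[i]) : R := (complex.Re z) ^+ 2 + (complex.Im z) ^+ 2.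

Definition tight_frame (R : realType) (H : lmodType R[i]) (ip : H -> H -> R[i])
    (I : choiceType) (fr : I -> H) (lambda : R) : Prop :=
  forall f : H, has_usum (fun x : R => `|x|) [set: I]
                  (fun i => csq (ip f (fr i))) (lambda * hnorm ip f ^+ 2).

(* Main.v *)
Require Import Defs.
From HB Require Import structures.
From mathcomp Require Import all_boot all_order all_algebra.
From mathcomp Require Import finmap.
From mathcomp Require Import boolp classical_sets reals.
From mathcomp Require Import complex.
From mathcomp Require Import ring lra.

Import Order.TTheory GRing.Theory Num.Theory.
Local Open Scope ring_scope.
Local Open Scope complex_scope.

Section Basics.
Variable R : realType.
Variable H : lmodType R[i].
Variable ip : H -> H -> R[i].
Hypothesis hH : is_hilbert ip.

Definition Nq (x : H) : R := complex.Re (ip x x).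

Lemma ipDl x y z : ip (x + y) z = ip x z + ip y z.
Proof. by have := ip_linear hH 1 x y z; rewrite scale1r mul1r. Qed.

Lemma ip0l z : ip 0 z = 0.
Proof.
have := ipDl 0 0 z; rewrite addr0 => h.
by apply: (addrI (ip 0 z)); rewrite -h addr0.
Qed.

Lemma ipZl a x z : ip (a *: x) z = a * ip x z.
Proof. by have := ip_linear hH a x 0 z; rewrite addr0 ip0l addr0. Qed.

Lemma ipNl x z : ip (- x) z = - ip x z.
Proof. by rewrite -scaleN1r ipZl mulN1r. Qed.

Lemma ipBl x y z : ip (x - y) z = ip x z - ip y z.
Proof. by rewrite ipDl ipNl. Qed.

Lemma ipDr x y z : ip z (x + y) = ip z x + ip z y.
Proof. by rewrite (ip_conj hH (x + y) z) (ip_conj hH x z) (ip_conj hH y z) ipDl rmorphD. Qed.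

Lemma ipZr a x z : ip z (a *: x) = a^* * ip z x.
Proof. by rewrite (ip_conj hH (a *: x) z) (ip_conj hH x z) ipZl rmorphM. Qed.

Lemma ipNr x z : ip z (- x) = - ip z x.
Proof. by rewrite (ip_conj hH (- x) z) (ip_conj hH x z) ipNl rmorphN. Qed.

Lemma ipBr x y z : ip z (x - y) = ip z x - ip z y.
Proof. by rewrite ipDr ipNr. Qed.

Lemma ip_suml (J : Type) (s : seq J) (g : J -> H) z :
  ip (\sum_(j <- s) g j) z = \sum_(j <- s) ip (g j) z.
Proof. exact: (big_morph (fun x => ip x z) (fun x y => ipDl x y z) (ip0l z)). Qed.

Lemma ReJ (z : R[i]) : complex.Re (z^*) = complex.Re z.
Proof. by case: z. Qed.

Lemma Re_ip_sym x y : complex.Re (ip y x) = complex.Re (ip x y).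
Proof. by rewrite (ip_conj hH) ReJ. Qed.

Lemma ReD (a b : R[i]) : complex.Re (a + b) = complex.Re a + complex.Re b.
Proof. by case: a; case: b. Qed.

Lemma ReN (a : R[i]) : complex.Re (- a) = - complex.Re a.
Proof. by case: a. Qed.

Lemma ReMC (k : R) (z : R[i]) : complex.Re (k%:C * z) = k * complex.Re z.
Proof. by case: z => a b /=; rewrite mul0r subr0. Qed.

Lemma conjC_real (k : R) : (k%:C)^* = k%:C.
Proof. by rewrite /= oppr0. Qed.

Lemma Nq_ge0 x : 0 <= Nq x.
Proof.
have [->|nx] := eqVneq x 0; first by rewrite /Nq ip0l.
exact: ltW (ip_pos hH nx).
Qed.

Lemma Nq_eq0 x : Nq x <= 0 -> x = 0.
Proof.
move=> h; apply/eqP; apply: contraTT h => nx.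
by rewrite -ltNge (ip_pos hH nx).
Qed.

Lemma NqD x y : Nq (x + y) = Nq x + 2 * complex.Re (ip x y) + Nq y.
Proof.
rewrite /Nq ipDl !ipDr !ReD (Re_ip_sym x y); ring.
Qed.

Lemma NqN x : Nq (- x) = Nq x.
Proof. by rewrite /Nq ipNl ipNr opprK. Qed.

Lemma NqB x y : Nq (x - y) = Nq x - 2 * complex.Re (ip x y) + Nq y.
Proof. by rewrite NqD ipNr ReN NqN; ring. Qed.

Lemma NqZ (k : R) x : Nq (k%:C *: x) = k ^+ 2 * Nq x.
Proof. by rewrite /Nq ipZl ipZr; case: (ip x x) => a b /=; ring. Qed.

Lemma ipZlR (k : R) x y : complex.Re (ip (k%:C *: x) y) = k * complex.Re (ip x y).
Proof. by rewrite ipZl ReMC. Qed.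

Lemma ipZrR (k : R) x y : complex.Re (ip y (k%:C *: x)) = k * complex.Re (ip y x).
Proof. by rewrite ipZr; case: (ip y x) => a b /=; ring. Qed.

Lemma Re_ip_le t x y : 0 < t ->
  2 * complex.Re (ip x y) <= t * Nq x + Nq y / t.
Proof.
move=> t0.
have := Nq_ge0 (t%:C *: x - y).
rewrite NqB NqZ ipZlR => h.
have -> : t * Nq x + Nq y / t = (t ^+ 2 * Nq x + Nq y) / t by field; rewrite gt_eqF.
rewrite ler_pdivlMr //.
lra.
Qed.

Lemma Nq_add_le x y : Nq (x + y) <= 2 * Nq x + 2 * Nq y.
Proof.
rewrite NqD; have := Re_ip_le 1 x y ltr01; rewrite mul1r divr1; lra.
Qed.

Lemma Nq_add_le_t t x y : 0 < t ->
  Nq (x + y) <= (1 + t) * Nq x + (1 + t^-1) * Nq y.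
Proof.
move=> t0; rewrite NqD; have := Re_ip_le t x y t0; lra.
Qed.

Lemma Re_ip_abs t x y : 0 < t ->
  2 * `|complex.Re (ip x y)| <= t * Nq x + Nq y / t.
Proof.
move=> t0; have h1 := Re_ip_le t x y t0.
have := Re_ip_le t (- x) y t0; rewrite ipNl ReN NqN => h2.
case: (lerP 0 (complex.Re (ip x y))) => h.
  by rewrite ger0_norm.
by rewrite ltr0_norm //; lra.
Qed.

Lemma hnormE x : hnorm ip x = Num.sqrt (Nq x).
Proof. by []. Qed.

Lemma hnorm_sqr x : hnorm ip x ^+ 2 = Nq x.
Proof. by rewrite hnormE sqr_sqrtr // Nq_ge0. Qed.

Lemma hnorm_lt x e : 0 < e -> (hnorm ip x < e) = (Nq x < e ^+ 2).
Proof.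
move=> e0; have h0 : 0 <= hnorm ip x := sqrtr_ge0 _.
rewrite -hnorm_sqr; apply/idP/idP => h; nra.
Qed.


Variable I : choiceType.
Variable fr : I -> H.
Variable lambda : R.
Hypothesis hlam : 0 < lambda.
Hypothesis hframe : tight_frame ip fr lambda.
Variable f : H.


Definition cc (i : I) := ip f (fr i).
Definition qq (g : H) (i : I) := csq (ip g (fr i)).
Definition AA (g : H) (F : {fset I}) := \sum_(i <- F) qq g i.
Definition TT (F : {fset I}) := \sum_(i <- F) cc i *: fr i.

Lemma split_fset (V : zmodType) (g : I -> V) (P F : {fset I}) : (P `<=` F)%fset ->
  \sum_(i <- F) g i = \sum_(i <- P) g i + \sum_(i <- [fset x in F | x \notin P]%fset) g i.
Proof.
move=> /fsubsetP PF; rewrite (big_fsetID _ (mem P)) /=; congr (_ + _).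
apply: eq_fbigl => i; rewrite !inE /=.
by apply/idP/idP => [/andP[]//|iP]; rewrite iP PF.
Qed.

Lemma csq_ge0 (z : R[i]) : 0 <= csq z.
Proof. by rewrite /csq addr_ge0 // sqr_ge0. Qed.

Lemma AA_ge0 g F : 0 <= AA g F.
Proof. by apply: sumr_ge0 => i _; apply: csq_ge0. Qed.

Lemma AA_mono g P F : (P `<=` F)%fset -> AA g P <= AA g F.
Proof. by move=> PF; rewrite /AA (@split_fset _ (qq g) _ _ PF) lerDl AA_ge0. Qed.

Lemma AA_disj g P G : (forall i, i \in G -> i \notin P) ->
  AA g (P `|` G)%fset = AA g P + AA g G.
Proof.
move=> dj; rewrite /AA (@split_fset _ (qq g) _ _ (fsubsetUl P G)); congr (_ + _).
apply: eq_fbigl => i; rewrite !inE /=.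
by case: (boolP (i \in G)) => iG; [rewrite orbT dj | rewrite orbF andbN].
Qed.

Lemma frame_upper g F : AA g F <= lambda * Nq g.
Proof.
apply/ler_addgt0Pr => e e0.
have [F0 [_ hF0]] := hframe g e e0.
have := hF0 (F0 `|` F)%fset (fsubsetUl _ _) (fun _ _ => Logic.I).
rewrite hnorm_sqr => h.
have := @AA_mono g _ _ (fsubsetUr F0 F).
rewrite /AA /qq in h * => hm.
rewrite ltr_norml in h; case/andP: h => h1 h2.
lra.
Qed.

Lemma tailK (K : set I) e : 0 < e -> exists F0 : {fset I},
  (forall i, i \in F0 -> K i) /\
  forall G : {fset I}, (forall i, i \in G -> K i) ->
    (forall i, i \in G -> i \notin F0) -> AA f G < e.
Proof.
move=> e0; have e20 : 0 < e / 2 by rewrite divr_gt0.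
have [F0 [_ hF0]] := hframe f (e / 2) e20.
exists [fset x in F0 | x \in K]%fset; split.
  by move=> i; rewrite !inE => /andP[_ /set_mem].
move=> G GK dj.
have dj' : forall i, i \in G -> i \notin F0.
  move=> i iG; apply/negP => iF0; have := dj i iG.
  by rewrite !inE iF0 /= (mem_set (GK i iG)).
have h1 : `|lambda * hnorm ip f ^+ 2 - AA f F0| < e / 2
  := hF0 F0 (fsubset_refl _) (fun _ _ => Logic.I).
have h2 : `|lambda * hnorm ip f ^+ 2 - AA f (F0 `|` G)%fset| < e / 2
  := hF0 (F0 `|` G)%fset (fsubsetUl _ _) (fun _ _ => Logic.I).
rewrite (@AA_disj f _ _ dj') in h2.
rewrite ltr_norml in h1; rewrite ltr_norml in h2.
case/andP: h1 => h1 h1'; case/andP: h2 => h2 h2'.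
lra.
Qed.

Lemma Re_conj_le (c d : R[i]) :
  2 * complex.Re (c * d^*) <= lambda * csq c + csq d / lambda.
Proof.
case: c => a b; case: d => x y; rewrite /csq /=.
have l0 : lambda != 0 by rewrite gt_eqF.
have e1 : (lambda * a - x) ^+ 2 / lambda = lambda * a ^+ 2 - 2 * a * x + x ^+ 2 / lambda
  by field.
have e2 : (lambda * b - y) ^+ 2 / lambda = lambda * b ^+ 2 - 2 * b * y + y ^+ 2 / lambda
  by field.
have p1 : 0 <= (lambda * a - x) ^+ 2 / lambda by rewrite divr_ge0 ?sqr_ge0 // ltW.
have p2 : 0 <= (lambda * b - y) ^+ 2 / lambda by rewrite divr_ge0 ?sqr_ge0 // ltW.
have e3 : (x ^+ 2 + y ^+ 2) / lambda = x ^+ 2 / lambda + y ^+ 2 / lambda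
  by field.
rewrite e3; lra.
Qed.

Lemma Re0 : complex.Re (0 : R[i]) = 0. Proof. by []. Qed.

Lemma Re_sum (s : seq I) (F : I -> R[i]) :
  complex.Re (\sum_(i <- s) F i) = \sum_(i <- s) complex.Re (F i).
Proof. exact: (big_morph _ ReD Re0). Qed.

Lemma Bessel G : Nq (TT G) <= lambda * AA f G.
Proof.
set g := TT G.
have e1 : ip g g = \sum_(i <- G) cc i * (ip g (fr i))^*.
  rewrite {1}/g /TT ip_suml; apply: eq_bigr => i _.
  by rewrite ipZl (ip_conj hH g (fr i)).
have h : 2 * Nq g <= lambda * AA f G + AA g G / lambda.
  rewrite /Nq e1 Re_sum /AA mulr_sumr mulr_sumr mulr_suml -big_split /=.
  by apply: ler_sum => i _; apply: Re_conj_le.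
have h2 := frame_upper g G.
have h3 : AA g G / lambda <= Nq g by rewrite ler_pdivrMr // mulrC.
lra.
Qed.

Lemma ReT F : complex.Re (ip (TT F) f) = AA f F.
Proof.
rewrite /TT ip_suml Re_sum /AA; apply: eq_bigr => i _.
rewrite ipZl /cc (ip_conj hH f (fr i)) /qq /csq.
case: (ip f (fr i)) => a b /=; ring.
Qed.

Lemma real_sum (K : set I) : exists a, has_usum (fun x : R => `|x|) K (qq f) a.
Proof.
set S := [set r | exists F : {fset I}, (forall i, i \in F -> K i) /\ r = AA f F]%classic.
have hS : has_sup S.
  split.
    exists 0; exists fset0; split => [i|]; first by rewrite inE.
    by rewrite /AA big_seq_fset0.
  by exists (lambda * Nq f) => r [F [_ ->]]; apply: frame_upper.
exists (sup S) => e e0.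
have [r [F [FK ->]] hr] := sup_adherent e0 hS.
exists F; split => // F' FF' F'K.
have h1 : AA f F <= AA f F' := @AA_mono f _ _ FF'.
have h2 : AA f F' <= sup S by apply: sup_upper_bound => //; exists F'.
have -> : \sum_(i <- F') qq f i = AA f F' by [].
rewrite ger0_norm; lra.
Qed.

Fixpoint accum (Phi : nat -> {fset I}) (n : nat) : {fset I} :=
  match n with 0 => Phi 0%N | m.+1 => (accum Phi m `|` Phi m.+1)%fset end.

Lemma accum_sub Phi m n : (m <= n)%N -> (accum Phi m `<=` accum Phi n)%fset.
Proof.
elim: n => [|n IH]; first by rewrite leqn0 => /eqP ->.
rewrite leq_eqVlt => /orP[/eqP ->|]; first exact: fsubset_refl.
rewrite ltnS => /IH h; apply: (fsubset_trans h); exact: fsubsetUl.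
Qed.

Lemma Phi_sub Phi n : (Phi n `<=` accum Phi n)%fset.
Proof. by case: n => [|n] /=; [exact: fsubset_refl | exact: fsubsetUr]. Qed.

Lemma accumK (K : set I) Phi : (forall n i, i \in Phi n -> K i) ->
  forall n i, i \in accum Phi n -> K i.
Proof.
move=> h; elim => [|n IH] i /=; first exact: h.
by rewrite in_fsetU => /orP[/IH|/h].
Qed.

Lemma en_small (c : R) : 0 < c -> exists N, forall n, (N <= n)%N -> (n.+1%:R)^-1 < c.
Proof.
move=> c0; exists (Num.Def.archi_bound c^-1) => n hn.
have hc : 0 <= c^-1 by rewrite invr_ge0 ltW.
have h := archi_boundP hc.
rewrite invf_plt ?posrE // ?ltr0Sn //.
apply: (lt_le_trans h); rewrite ler_nat; exact: leqW.
Qed.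

Lemma diffT (P F : {fset I}) : (P `<=` F)%fset ->
  TT F - TT P = TT [fset x in F | x \notin P]%fset.
Proof. by move=> PF; rewrite /TT (@split_fset _ _ _ _ PF) addrC addKr. Qed.

Lemma vec_sum (K : set I) : exists s, has_usum (hnorm ip) K (fun i => cc i *: fr i) s.
Proof.
have hch : forall n : nat, exists F0 : {fset I}, (forall i, i \in F0 -> K i) /\
    forall G : {fset I}, (forall i, i \in G -> K i) ->
    (forall i, i \in G -> i \notin F0) -> AA f G < (n.+1%:R)^-1.
  by move=> n; apply: tailK; rewrite invr_gt0 ltr0Sn.
have [Phi hPhi] := choice hch.
set P := accum Phi.
have PK : forall n i, i \in P n -> K i.
  by apply: accumK => n i; apply: (proj1 (hPhi n)).
have dsmall : forall n F, (P n `<=` F)%fset -> (forall i, i \in F -> K i) ->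
    Nq (TT F - TT (P n)) < lambda * (n.+1%:R)^-1.
  move=> n F PF FK; rewrite diffT //.
  apply: (le_lt_trans (Bessel _)); rewrite ltr_pM2l //.
  apply: (proj2 (hPhi n)) => i; rewrite !inE => /andP[iP iF].
    exact: FK.
  by apply: contra iF => /(fsubsetP (Phi_sub Phi n)).
have Psub : forall m n, (m <= n)%N -> (P m `<=` P n)%fset by move=> m n; apply: accum_sub.
have [l hl] : exists l : H, forall e : R, 0 < e -> exists N : nat,
    forall n, (N <= n)%N -> hnorm ip (l - TT (P n)) < e.
  apply: (ip_complete hH) => e e0.
  have e2 : 0 < e ^+ 2 / (4 * lambda) by rewrite divr_gt0 ?exprn_gt0 ?mulr_gt0.
  have [N hN] := en_small _ e2.
  exists N => m n hm hn; rewrite hnorm_lt //.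
  have hmN := dsmall N (P m) (Psub _ _ hm) (PK m).
  have hnN := dsmall N (P n) (Psub _ _ hn) (PK n).
  have := Nq_add_le (TT (P m) - TT (P N)) (- (TT (P n) - TT (P N))).
  have -> : TT (P m) - TT (P N) + - (TT (P n) - TT (P N)) = TT (P m) - TT (P n)
    by rewrite opprB addrA subrK.
  rewrite NqN.
  have heN := hN N (leqnn N).
  set eN := (N.+1%:R)^-1 in hmN hnN heN *.
  have : lambda * eN < e ^+ 2 / 4.
    move: heN; rewrite ltr_pdivlMr ?mulr_gt0 // => h.
    rewrite ltr_pdivlMr //; lra.
  lra.
exists l => e e0.
have e2 : 0 < e / 2 by rewrite divr_gt0.
have [N1 hN1] := hl _ e2.
have e3 : 0 < e ^+ 2 / (4 * lambda) by rewrite divr_gt0 ?exprn_gt0 ?mulr_gt0.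
have [N2 hN2] := en_small _ e3.
set nn := maxn N1 N2.
exists (P nn); split; first exact: PK.
move=> F PF FK.
have h1 := hN1 nn (leq_maxl _ _).
rewrite hnorm_lt // in h1.
have h2 := dsmall nn F PF FK.
have h3 := hN2 nn (leq_maxr _ _).
rewrite hnorm_lt //.
have := Nq_add_le (l - TT (P nn)) (- (TT F - TT (P nn))).
have -> : l - TT (P nn) + - (TT F - TT (P nn)) = l - TT F
  by rewrite opprB addrA subrK.
rewrite NqN.
have -> : \sum_(i <- F) cc i *: fr i = TT F by [].
set en := (nn.+1%:R)^-1 in h2 h3 *.
have : lambda * en < e ^+ 2 / 4.
  move: h3; rewrite ltr_pdivlMr ?mulr_gt0 // => h.
  rewrite ltr_pdivlMr //; lra.
have : (e / 2) ^+ 2 = e ^+ 2 / 4 by field.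
lra.
Qed.

Lemma usum_split (V : zmodType) (Nv : V -> R)
  (hN : forall (p q : V) (e : R), 0 < e -> Nv p < e / 2 -> Nv q < e / 2 -> Nv (p + q) < e)
  (J : set I) (g : I -> V) x y :
  has_usum Nv J g x -> has_usum Nv (~` J)%classic g y -> has_usum Nv setT g (x + y).
Proof.
move=> hx hy e e0; have e2 : 0 < e / 2 by rewrite divr_gt0.
have [Fx [FxJ hFx]] := hx _ e2; have [Fy [FyJ hFy]] := hy _ e2.
exists (Fx `|` Fy)%fset; split => // F hF _.
have -> : \sum_(i <- F) g i = \sum_(i <- [fset i in F | i \in J]%fset) g i
    + \sum_(i <- [fset i in F | ~~ (i \in J)]%fset) g i
  by rewrite (big_fsetID _ (fun i => i \in J)).
rewrite opprD addrACA; apply: hN => //.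
  apply: hFx.
    apply/fsubsetP => i iFx; rewrite !inE (mem_set (FxJ i iFx)) andbT.
    by apply: (fsubsetP hF); rewrite in_fsetU iFx.
  by move=> i; rewrite !inE => /andP[_ /set_mem].
apply: hFy.
  apply/fsubsetP => i iFy; rewrite !inE.
  have -> : (i \in J) = false by apply/negP => /set_mem; apply: (FyJ i iFy).
  by rewrite andbT; apply: (fsubsetP hF); rewrite in_fsetU iFy orbT.
move=> i; rewrite !inE => /andP[_ nJ] Ji; move/negP: nJ; apply; exact: mem_set.
Qed.

Lemma small_e (M eps : R) : 0 < M -> 0 < eps ->
  exists e : R, [/\ 0 < e, e <= 1 & e * M <= eps].
Proof.
move=> M0 ep; case: (lerP (eps / M) 1) => h.
  exists (eps / M); split => //; first by rewrite divr_gt0.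
  by rewrite mulrC mulrCA divff ?gt_eqF // mulr1.
exists 1; split => //; rewrite mul1r.
by move: h; rewrite ltr_pdivlMr // mul1r => /ltW.
Qed.

Lemma limV (K : set I) s a :
  has_usum (hnorm ip) K (fun i => cc i *: fr i) s ->
  has_usum (fun x : R => `|x|) K (qq f) a ->
  complex.Re (ip s f) = a /\ Nq s <= lambda * a.
Proof.
move=> hs ha. have hl : (0 : R) < lambda by exact: hlam.
have key : forall e, 0 < e -> exists F, `|a - AA f F| < e /\ Nq (s - TT F) < e ^+ 2.
  move=> e e0.
  have [Fs [FsK hFs]] := hs _ e0; have [Fa [FaK hFa]] := ha _ e0.
  have UK : forall i, i \in (Fs `|` Fa)%fset -> K i.
    by move=> i; rewrite in_fsetU => /orP[/FsK|/FaK].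
  exists (Fs `|` Fa)%fset; split.
    exact: (hFa _ (fsubsetUr _ _) UK).
  rewrite -hnorm_lt //; exact: (hFs _ (fsubsetUl _ _) UK).
split.
  apply/eqP; rewrite -subr_eq0 -normr_le0; apply/ler_addgt0Pr => eps ep.
  rewrite add0r.
  have Nf0 := Nq_ge0 f.
  have Mf : 0 < 2 + Nq f by lra.
  have [e [e0 e1 eM]] := small_e _ _ Mf ep.
  have [F [hA hN]] := key e e0.
  have E : complex.Re (ip s f) - a = complex.Re (ip (s - TT F) f) + (AA f F - a).
    by rewrite ipBl ReD ReN ReT; ring.
  have ei : 0 < e^-1 by rewrite invr_gt0.
  have hR := Re_ip_abs _ (s - TT F) f ei.
  have h1 : e^-1 * Nq (s - TT F) <= e.
    rewrite ler_pdivrMl // -expr2; exact: ltW.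
  have h2 : Nq f / e^-1 = e * Nq f by rewrite invrK mulrC.
  rewrite h2 in hR.
  have h3 : `|complex.Re (ip s f) - a| <= `|complex.Re (ip (s - TT F) f)| + `|AA f F - a|
    by rewrite E ler_normD.
  have h4 : `|AA f F - a| = `|a - AA f F| by rewrite distrC.
  have h5 : e * (2 + Nq f) = 2 * e + e * Nq f by ring.
  have h6 : 0 <= e * Nq f by rewrite mulr_ge0 // ltW.
  lra.
apply/ler_addgt0Pr => eps ep.
have a0 : 0 <= a.
  apply/ler_addgt0Pr => e' e'0; have [F [hA _]] := key e' e'0.
  have := AA_ge0 f F; move: hA; rewrite ltr_norml => /andP[h _]; lra.
set M := lambda * a + 2 * lambda + 2.
have hM1 := mulr_ge0 (ltW hlam) a0.
have M0 : 0 < M by rewrite /M; lra.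
have [e [e0 e1 eM]] := small_e _ _ M0 ep.
have [F [hA hN]] := key e e0.
have P1 := Bessel F.
have P2 : AA f F <= a + e by move: hA; rewrite ltr_norml => /andP[h _]; lra.
have P3 : lambda * AA f F <= lambda * (a + e) by rewrite ler_pM2l.
have hst := Nq_add_le_t _ (TT F) (s - TT F) e0.
rewrite addrC subrK in hst.
have P4 : (1 + e) * Nq (TT F) <= (1 + e) * (lambda * (a + e)).
  rewrite ler_pM2l; [lra | lra].
have P5 : (1 + e^-1) * Nq (s - TT F) <= (1 + e^-1) * e ^+ 2.
  rewrite ler_pM2l; [exact: ltW | rewrite ltr_pwDl // ?invr_ge0 ?ltW //].
have P6 : (1 + e^-1) * e ^+ 2 = e ^+ 2 + e by field; rewrite gt_eqF.
have W : lambda * a + lambda + lambda * e + e + 1 <= M.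
  have w2 : lambda * e <= lambda by rewrite ger_pMr.
  rewrite /M; lra.
have W2 : e * (lambda * a + lambda + lambda * e + e + 1) <= e * M by rewrite ler_pM2l.
have E : (1 + e) * (lambda * (a + e)) + (e ^+ 2 + e)
       = lambda * a + e * (lambda * a + lambda + lambda * e + e + 1) by ring.
lra.
Qed.

Lemma main_sec (J : set I) :
  exists (a b : R) (sJ sJc : H),
    [/\ has_usum (fun x : R => `|x|) J (fun i => csq (ip f (fr i))) a,
        has_usum (fun x : R => `|x|) (~` J)%classic (fun i => csq (ip f (fr i))) b,
        has_usum (hnorm ip) J (fun i => ip f (fr i) *: fr i) sJ,
        has_usum (hnorm ip) (~` J)%classic (fun i => ip f (fr i) *: fr i) sJc &
        lambda * a - hnorm ip sJ ^+ 2 = lambda * b - hnorm ip sJc ^+ 2].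
Proof.
have hl : (0 : R) < lambda by exact: hlam.
have [a ha] := real_sum J; have [b hb] := real_sum (~` J)%classic.
have [sJ hsJ] := vec_sum J; have [sJc hsJc] := vec_sum (~` J)%classic.
exists a, b, sJ, sJc; split => //.
have hNv : forall (p q : H) (e : R), 0 < e -> hnorm ip p < e / 2 -> hnorm ip q < e / 2 ->
    hnorm ip (p + q) < e.
  move=> p q e e0; have e2 : 0 < e / 2 by rewrite divr_gt0.
  rewrite !hnorm_lt // => hp hq.
  have := Nq_add_le p q; have : (e / 2) ^+ 2 = e ^+ 2 / 4 by field.
  lra.
have hNa : forall (p q : R) (e : R), 0 < e -> `|p| < e / 2 -> `|q| < e / 2 -> `|p + q| < e.
  move=> p q e e0 hp hq; have := ler_normD p q; lra.
have hu := usum_split _ _ hNv _ _ _ _ hsJ hsJc.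
have hab := usum_split _ _ hNa _ _ _ _ ha hb.
have hL : has_usum (fun x : R => `|x|) setT (qq f) (lambda * Nq f).
  by rewrite -hnorm_sqr; exact: hframe f.
have [Ru1 Nu1] := limV _ _ _ hu hab.
have [Ru2 _] := limV _ _ _ hu hL.
have [RsJ _] := limV _ _ _ hsJ ha.
have ab : a + b = lambda * Nq f by rewrite -Ru1 Ru2.
rewrite ab in Nu1.
have hw : Nq (sJ + sJc - lambda%:C *: f) <= 0.
  rewrite NqB NqZ ipZrR Ru2.
  have : lambda ^+ 2 * Nq f = lambda * (lambda * Nq f) by ring.
  lra.
have Hs : sJ + sJc = lambda%:C *: f by apply/eqP; rewrite -subr_eq0 (Nq_eq0 _ hw).
have Ec : sJc = lambda%:C *: f - sJ by rewrite -Hs [sJ + sJc]addrC addrK.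
rewrite !hnorm_sqr Ec NqB NqZ ipZlR (Re_ip_sym sJ f) RsJ.
have -> : b = lambda * Nq f - a by lra.
ring.
Qed.

End Basics.

Local Open Scope classical_set_scope.

Theorem corollary3p4 (R : realType) (H : lmodType R[i]) (ip : H -> H -> R[i])
    (hH : is_hilbert ip) (I : choiceType) (fr : I -> H) (lambda : R)
    (hlam : 0 < lambda) (hframe : tight_frame ip fr lambda)
    (J : set I) (f : H) :
  exists (a b : R) (sJ sJc : H),
    [/\ has_usum (fun x : R => `|x|) J (fun i => csq (ip f (fr i))) a,
        has_usum (fun x : R => `|x|) (~` J) (fun i => csq (ip f (fr i))) b,
        has_usum (hnorm ip) J (fun i => ip f (fr i) *: fr i) sJ,
        has_usum (hnorm ip) (~` J) (fun i => ip f (fr i) *: fr i) sJc &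
        lambda * a - hnorm ip sJ ^+ 2 = lambda * b - hnorm ip sJc ^+ 2].
Proof. exact: (@main_sec R H ip hH I fr lambda hlam hframe f J). Qed.
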